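(* Consider the fully observable discrete-time system $x_{t+1}=f(x_t,u_t,d_t)$ with $x\in\mathcal{X}$, $u\in\mathcal{U}$, $d\in\mathcal{D}$, failure set $\mathcal{F}\subseteq\mathcal{X}$, a fallback policy $\pi^{\text{shield}}:\mathcal{X}\to\mathcal{U}$, a horizon $H\ge1$, and a terminal safe set $\Omega\subseteq\mathcal{X}$ with $\Omega\cap\mathcal{F}=\emptyset$ that is robustly invariant under $\pi^{\text{shield}}$ (i.e. $f(x,\pi^{\text{shield}}(x),d)\in\Omega$ for all $x\in\Omega$, $d\in\mathcal{D}$). For $x\in\mathcal{X}$, $u\in\mathcal{U}$ define $\hat{\mathcal{X}}_0=\{x\}$, $\hat{\mathcal{X}}_1=\{f(x,u,d):d\in\mathcal{D}\}$, and $\hat{\mathcal{X}}_{\tau+1}=\{f(\hat x,\pi^{\text{shield}}(\hat x),d):\hat x\in\hat{\mathcal{X}}_\tau,d\in\mathcal{D}\}$ for $\tau\ge1$, and the switch-type filter $$\phi(x,u)=\begin{cases}u, & \hat{\mathcal{X}}_\tau\cap\mathcal{F}=\emptyset\ \forall\tau\in\{0,\dots,H\}\ \text{and}\ \hat{\mathcal{X}}_H\subseteq\Omega,\\ \pi^{\text{shield}}(x), & \text{otherwise.}\end{cases}$$ Then for every task policy $\pi^{\text{task}}:\mathcal{X}\to\mathcal{U}$ and every deployment state $x_0\in\Omega$, the system with inputs $u_t=\phi(x_t,\pi^{\text{task}}(x_t))$ satisfies $x_t\notin\mathcal{F}$ for all $t\ge0$ and all disturbance sequences $d_0,d_1,\dots\in\mathcal{D}$.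 *)

(* Defs.v *)
From Stdlib Require Import ClassicalDescription.

Set Implicit Arguments.

Section Shield.
Variables (X U D : Type) (f : X -> U -> D -> X) (Dset : D -> Prop)
          (pi_shield : X -> U).

Fixpoint Xhat (x : X) (u : U) (tau : nat) : X -> Prop :=
  match tau with
  | O => fun y => y = x
  | S O => fun y => exists d, Dset d /\ y = f x u d
  | S tau' => fun y => exists xh d, Xhat x u tau' xh /\ Dset d /\
                         y = f xh (pi_shield xh) d
  end.

Definition accept (F Omega : X -> Prop) (H : nat) (x : X) (u : U) : Prop :=
  (forall tau, tau <= H -> forall y, Xhat x u tau y -> ~ F y) /\
  (forall y, Xhat x u H y -> Omega y).

Definition phi (F Omega : X -> Prop) (H : nat) (x : X) (u : U) : U :=
  if excluded_middle_informative (accept F Omega H x u) then u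
  else pi_shield x.

Fixpoint traj (F Omega : X -> Prop) (H : nat) (pi_task : X -> U)
         (x0 : X) (d : nat -> D) (t : nat) : X :=
  match t with
  | O => x0
  | S t' => let xt := traj F Omega H pi_task x0 d t' in
            f xt (phi F Omega H xt (pi_task xt)) (d t')
  end.
End Shield.

(* Main.v *)
Require Import Defs.
From Stdlib Require Import Lia ClassicalDescription.

Theorem corollary3 (X U D : Type) (f : X -> U -> D -> X) (Dset : D -> Prop)
  (F : X -> Prop) (pi_shield : X -> U) (H : nat) (Omega : X -> Prop)
  (HH : 1 <= H)
  (HOmegaF : forall x, Omega x -> ~ F x)
  (Hinv : forall x d, Omega x -> Dset d -> Omega (f x (pi_shield x) d)) :
  forall (pi_task : X -> U) (x0 : X), Omega x0 ->
  forall (d : nat -> D), (forall t, Dset (d t)) ->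
  forall t, ~ F (traj f Dset pi_shield F Omega H pi_task x0 d t).
Proof.
  intros pi_task x0 H0 d Hd.
  set (Inv := fun x => Omega x \/ exists x' u' k, 1 <= k <= H /\
      accept f Dset pi_shield F Omega H x' u' /\ Xhat f Dset pi_shield x' u' k x).
  assert (Hsafe : forall x, Inv x -> ~ F x).
  { intros x [Ho | [x' [u' [k [Hk [[Ha1 _] Hx]]]]]]; auto.
    apply (Ha1 k); [lia | exact Hx]. }
  assert (Hstep : forall x u dd, Inv x -> Dset dd ->
     Inv (f x (phi f Dset pi_shield F Omega H x u) dd)).
  { intros x u dd Hx Hdd. unfold phi.
    destruct (excluded_middle_informative (accept f Dset pi_shield F Omega H x u)) as [Ha|Ha].
    - right. exists x, u, 1. split; [lia|]. split; [exact Ha|]. simpl. eauto.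
    - destruct Hx as [Ho | [x' [u' [k [Hk [Hacc Hx]]]]]].
      + left. auto.
      + destruct (PeanoNat.Nat.eq_dec k H) as [->|Hne].
        * left. apply Hinv; auto. destruct Hacc as [_ Ha2]. auto.
        * right. exists x', u', (S k). split; [lia|]. split; [exact Hacc|].
          destruct k as [|k']; [lia|]. simpl. exists x, dd. auto. }
  assert (forall t, Inv (traj f Dset pi_shield F Omega H pi_task x0 d t)).
  { induction t; simpl.
    - left; auto.
    - apply Hstep; auto. }
  intro t. apply Hsafe. auto.
Qed.
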